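(* Let $m\geq4$ be an integer and let $G$ be an $m$-free digraph. Then for every $v\in V(G)$ and every integer $k$ with $1\leq k\leq m-3$: $$p_k(v)=|E(N^+_{k+1}(v),N^+_{k+2}(v))|,\qquad q_k(v)\leq |\bar E(N^-_{k+1}(v),N^+_1(v))|,\qquad r_k(v)\leq|\bar E(N^-_1(v),N^-_{k+2}(v))|,$$ $$p'_k(v)\leq|\bar E(N^+_1(v),N^+_{k+2}(v))|,\qquad q'_k(v)\leq|\bar E(N^+_{k+1}(v),N^-_1(v))|,\qquad r'_k(v)=|E(N^-_{k+2}(v),N^-_{k+1}(v))|.$$
   Context: All digraphs are finite, without loops and without parallel edges. A digraph is $m$-free if it has no directed cycle of length at most $m$. For a vertex $v$ and $i\geq 0$, $N_i^+(v)$ is the set of vertices $u$ such that the shortest directed path from $v$ to $u$ has length exactly $i$, and $N_i^-(v)$ is the set of vertices $u$ such that the shortest directed path from $u$ to $v$ has length exactly $i$. For $A,B\subseteq V(G)$, $E(A,B)$ is the set of edges $(a,b)$ with $a\in A$, $b\in B$, and $\bar E(A,B)$ is the set of pairs $(a,b)\in A\times B$ with $a\neq b$ such that neither $(a,b)$ nor $(b,a)$ is an edge. A directed path $(v_0,\dots,v_k)$ consists of distinct vertices with $(v_i,v_{i+1})$ an edge for each $i$; its length is $k$. It is induced if every edge of $G$ with both ends in $\{v_0,\dots,v_k\}$ is one of the edges $(v_i,v_{i+1})$; it is a shortest induced directed path if it is induced and $v_k\in N_k^+(v_0)$. Let $\mathscr{P}(G)$ be the set of shortest induced directed paths of $G$.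 For an integer $k\geq1$ and $v\in V(G)$: $P_k(v)$ (resp. $Q_k(v)$, $R_k(v)$) is the set of triples $(x,y,z)$ of vertices for which there exist vertices $w_1,\dots,w_k$ with $(x,w_1,\dots,w_k,y,z)\in\mathscr{P}(G)$ and $x=v$ (resp. $y=v$, $z=v$). $P'_k(v)$ (resp. $Q'_k(v)$, $R'_k(v)$) is the set of triples $(x,y,z)$ for which there exist $w_1,\dots,w_k$ with $(x,y,w_1,\dots,w_k,z)\in\mathscr{P}(G)$ and $x=v$ (resp. $y=v$, $z=v$). Lowercase letters denote cardinalities: $p_k(v)=|P_k(v)|$, etc. *)

(* Defs.v *)
(* Digraphs: a finite type T of vertices with an edge
   relation e : rel T (no parallel edges automatically; loops excluded by
   an irreflexivity hypothesis in the theorem). *)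
From mathcomp Require Import all_boot.
Set Implicit Arguments. Unset Strict Implicit. Unset Printing Implicit Defensive.

Section Digraph.
Variables (T : finType) (e : rel T).

Definition has_dpath (x y : T) (k : nat) : bool :=
  [exists s : k.-tuple T, [&& path e x s, uniq (x :: s) & last x s == y]].

Definition Nout (v : T) (i : nat) : {set T} :=
  [set u | has_dpath v u i & [forall j : 'I_i, ~~ has_dpath v u j]].

Definition Nin (v : T) (i : nat) : {set T} :=
  [set u | has_dpath u v i & [forall j : 'I_i, ~~ has_dpath u v j]].

Definition mfree (m : nat) : Prop :=
  forall (x : T) (s : seq T), path e x s -> uniq (x :: s) ->
    e (last x s) x -> m < (size s).+1.

Definition Eset (A B : {set T}) : {set T * T} :=
  [set p : T * T | [&& p.1 \in A, p.2 \in B & e p.1 p.2]].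

Definition Ebar (A B : {set T}) : {set T * T} :=
  [set p : T * T | [&& p.1 \in A, p.2 \in B, p.1 != p.2,
                       ~~ e p.1 p.2 & ~~ e p.2 p.1]].

Definition sipath (x : T) (s : seq T) : bool :=
  [&& path e x s, uniq (x :: s),
      [forall i : 'I_(size s).+1, forall j : 'I_(size s).+1,
         e (nth x (x :: s) i) (nth x (x :: s) j) ==> (j == i.+1 :> nat)]
    & last x s \in Nout x (size s)].

Definition sipA (k : nat) (x y z : T) : bool :=
  [exists w : k.-tuple T, sipath x (w ++ [:: y; z])].
Definition sipB (k : nat) (x y z : T) : bool :=
  [exists w : k.-tuple T, sipath x (y :: w ++ [:: z])].

Definition Pk k v : {set T * T * T} := [set t | sipA k t.1.1 t.1.2 t.2 & t.1.1 == v].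
Definition Qk k v : {set T * T * T} := [set t | sipA k t.1.1 t.1.2 t.2 & t.1.2 == v].
Definition Rk k v : {set T * T * T} := [set t | sipA k t.1.1 t.1.2 t.2 & t.2 == v].
Definition Pk' k v : {set T * T * T} := [set t | sipB k t.1.1 t.1.2 t.2 & t.1.1 == v].
Definition Qk' k v : {set T * T * T} := [set t | sipB k t.1.1 t.1.2 t.2 & t.1.2 == v].
Definition Rk' k v : {set T * T * T} := [set t | sipB k t.1.1 t.1.2 t.2 & t.2 == v].

End Digraph.

(* Main.v *)
Require Import Defs.
From mathcomp Require Import all_boot zify.
Set Implicit Arguments. Unset Strict Implicit. Unset Printing Implicit Defensive.

Section S.
Variables (T : finType) (e : rel T).

Definition W x y n := exists f : nat -> T,
  [/\ f 0 = x, f n = y & forall i, i < n -> e (f i) (f i.+1)].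
Definition D x y n := W x y n /\ forall j, j < n -> ~ W x y j.

Lemma mkE (g : nat -> T) c t : t <= c ->
  nth (g 0) (g 0 :: mkseq (fun t => g t.+1) c) t = g t.
Proof. case: t => [|t] //= H. by rewrite nth_mkseq. Qed.

Lemma mk_path (g : nat -> T) c : (forall i, i < c -> e (g i) (g i.+1)) ->
  path e (g 0) (mkseq (fun t => g t.+1) c).
Proof.
move=> H; apply/(pathP (g 0)) => i; rewrite size_mkseq => Hi.
rewrite mkE ?nth_mkseq //; [exact: H | exact: ltnW].
Qed.

Lemma mk_uniq (g : nat -> T) c :
  (forall i j, i <= c -> j <= c -> g i = g j -> i = j) ->
  uniq (g 0 :: mkseq (fun t => g t.+1) c).
Proof.
move=> H; apply/(uniqP (g 0)) => i j; rewrite /in_mem /= size_mkseq => Hi Hj.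
rewrite !mkE //; exact: H.
Qed.

Lemma mk_last (g : nat -> T) c : last (g 0) (mkseq (fun t => g t.+1) c) = g c.
Proof. by rewrite (last_nth (g 0)) size_mkseq mkE. Qed.

Lemma W_refl x : W x x 0.
Proof. by exists (fun _ => x). Qed.

Lemma W0 x y : W x y 0 -> x = y.
Proof. by case=> f [<- <-]. Qed.

Lemma W1 x y : W x y 1 -> e x y.
Proof. by case=> f [<- <- H]; exact: H. Qed.

Lemma W1' x y : e x y -> W x y 1.
Proof. move=> H; exists (fun i => if i is 0 then x else y); split => //; by case. Qed.

Lemma W_cat x y z a b : W x y a -> W y z b -> W x z (a + b).
Proof.
case=> f [f0 fa Hf] [g [g0 gb Hg]].
exists (fun i => if i <= a then f i else g (i - a)); split.
- by rewrite leq0n.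
- case: ifP => H. have Hb : b = 0 by move: H; rewrite -{2}[a]addn0 leq_add2l leqn0 => /eqP. subst b; by rewrite addn0 fa -g0 -gb.
  by rewrite addKn.
- move=> i Hi /=. case: (ltngtP i a) => H.
  + exact: Hf.
  + rewrite subSn; last exact: ltnW.
    apply: Hg; lia.
  + subst i; rewrite subSn // subnn fa -g0. apply: Hg; lia.
Qed.

Lemma W_sub (f : nat -> T) n i j : (forall t, t < n -> e (f t) (f t.+1)) ->
  i <= j <= n -> W (f i) (f j) (j - i).
Proof.
move=> H /andP[ij jn]; exists (fun t => f (i + t)); split.
- by rewrite addn0.
- by rewrite subnKC.
- move=> t Ht; rewrite addnS; apply: H; lia.
Qed.

Lemma dp_W x y n : has_dpath e x y n -> W x y n.
Proof.
case/existsP=> s /and3P[Hp Hu /eqP Hl].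
exists (fun i => nth x (x :: s) i); split => //.
- by rewrite -Hl (last_nth x) size_tuple.
- move=> i Hi; move/(pathP x): Hp; apply; by rewrite size_tuple.
Qed.

Lemma W_dp x y n : W x y n -> exists2 j, j <= n & has_dpath e x y j.
Proof.
case=> f [f0 fn Hf].
have Hp := mk_path Hf.
have := mk_last f n.
case: (shortenP Hp) => s' Hp' Hu' Hsub Hl.
exists (size s').
  case/andP: (Hu') => _ Hu2.
  have := uniq_leq_size Hu2 Hsub. by rewrite size_mkseq.
apply/existsP; exists (in_tuple s'); rewrite -f0; apply/and3P; split; [exact: Hp' | exact: Hu' | by rewrite /= Hl fn].
Qed.

Lemma D_iff x y n :
  (has_dpath e x y n && [forall j : 'I_n, ~~ has_dpath e x y j]) <-> D x y n.
Proof.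
split.
- case/andP=> H /forallP H2; split; first exact: dp_W.
  move=> j jn /W_dp [j' j'j Hj']. have := H2 (Ordinal (leq_ltn_trans j'j jn)).
  by rewrite Hj'.
- case=> [Hw Hn]; case: (W_dp Hw) => j jn Hj.
  case: (ltngtP j n) => Hjn; [by case: (Hn j Hjn); exact: dp_W| lia |].
  subst j; rewrite Hj /=; apply/forallP => j; apply/negP => /dp_W.
  exact: Hn (ltn_ord j).
Qed.

Lemma NoutP v u n : u \in Nout e v n <-> D v u n.
Proof. by rewrite inE; exact: D_iff. Qed.
Lemma NinP v u n : u \in Nin e v n <-> D u v n.
Proof. by rewrite inE; exact: D_iff. Qed.

Lemma D_geo (f : nat -> T) n : (forall i, i < n -> e (f i) (f i.+1)) ->
  D (f 0) (f n) n -> forall i j, i <= j <= n -> D (f i) (f j) (j - i).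
Proof.
move=> Hf [_ Hn] i j Hij; split; first exact: W_sub Hij.
move=> l Hl Hw; case/andP: Hij => ij jn.
have H1 : W (f 0) (f i) i by have := W_sub Hf (i:=0) (j:=i); rewrite subn0; apply; lia.
have H2 : W (f j) (f n) (n - j) by apply: W_sub Hf _; lia.
apply: (Hn (i + l + (n - j))); first lia.
exact: W_cat (W_cat H1 Hw) H2.
Qed.

Lemma geo_inj (f : nat -> T) n : (forall i, i < n -> e (f i) (f i.+1)) ->
  D (f 0) (f n) n -> forall i j, i <= n -> j <= n -> f i = f j -> i = j.
Proof.
move=> Hf Hd.
have key : forall i j, i < j <= n -> f i <> f j.
  move=> i j /andP[ij jn] Heq.
  have [_ H] := D_geo Hf Hd (i:=i) (j:=j) (introT andP (conj (ltnW ij) jn)).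
  apply: (H 0); first lia. rewrite Heq; exact: W_refl.
move=> i j Hi Hj Heq; case: (ltngtP i j) => // H.
- by case: (key i j); [lia|].
- by case: (key j i); [lia|].
Qed.

Lemma sip_of m : irreflexive e -> mfree e m -> forall (f : nat -> T) n, n < m ->
  (forall i, i < n -> e (f i) (f i.+1)) -> D (f 0) (f n) n ->
  sipath e (f 0) (mkseq (fun t => f t.+1) n).
Proof.
move=> Hirr Hm f n nm Hf Hd.
have Hinj := geo_inj Hf Hd.
rewrite /sipath mk_path // mk_uniq // size_mkseq mk_last /=.
apply/andP; split; last by apply/NoutP.
apply/forallP => i; apply/forallP => j; apply/implyP.
have Hi : i <= n by rewrite -ltnS ltn_ord.
have Hj : j <= n by rewrite -ltnS ltn_ord.
rewrite !mkE // => Hij.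
case: (ltngtP j i.+1) => // H; exfalso.
- case: (eqVneq (j : nat) i) => Hji.
  + by rewrite Hji Hirr in Hij.
  + pose g := fun t => f (j + t).
    have := Hm (g 0) (mkseq (fun t => g t.+1) (i - j)).
    rewrite mk_path; last by move=> t Ht; rewrite /g addnS; apply: Hf; lia.
    rewrite mk_uniq; last first.
      move=> a b Ha Hb; rewrite /g => /Hinj. move=> Hab. have : j + a = j + b by apply: Hab; lia.
      lia.
    rewrite mk_last size_mkseq /g subnKC ?addn0; last lia.
    move=> /(_ isT isT Hij). lia.
- have [_ Hn] := D_geo Hf Hd (i:=i) (j:=j) (introT andP (conj (ltnW (ltnW H)) Hj)).
  apply: (Hn 1); first lia. exact: W1'.
Qed.

Lemma sip_props x s : sipath e x s ->
  [/\ forall i, i < size s -> e (nth x (x::s) i) (nth x (x::s) i.+1),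
      D (nth x (x::s) 0) (nth x (x::s) (size s)) (size s)
    & forall i j, i <= size s -> j <= size s ->
        e (nth x (x::s) i) (nth x (x::s) j) -> j = i.+1].
Proof.
case/and4P => Hp Hu /forallP Hind /NoutP Hd; split.
- move=> i Hi; exact: (pathP x Hp).
- by rewrite (last_nth x) in Hd.
- move=> i j Hi Hj H.
  have Hi' : i < (size s).+1 by [].
  have Hj' : j < (size s).+1 by [].
  have /forallP/(_ (Ordinal Hj')) := Hind (Ordinal Hi').
  by move/implyP/(_ H)/eqP.
Qed.

Lemma mkseq2 (h : nat -> T) k : mkseq h k.+2 = mkseq h k ++ [:: h k; h k.+1].
Proof. by rewrite !mkseqS -!cats1 -catA. Qed.

Lemma mkseq_front (h : nat -> T) n : mkseq h n.+1 = h 0 :: mkseq (fun t => h t.+1) n.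
Proof. elim: n => [|n IH] //; by rewrite mkseqS IH mkseqS rcons_cons. Qed.

Lemma sip_facts x s : sipath e x s ->
  let f := fun i => nth x (x :: s) i in
  [/\ f 0 = x,
      (forall i j, i <= j <= size s -> D (f i) (f j) (j - i)),
      (forall i j, i <= size s -> j <= size s -> i != j -> f i != f j) &
      (forall i j, i <= size s -> j <= size s -> j != i.+1 -> ~~ e (f i) (f j))].
Proof.
move=> Hs f; have [He Hd Hind] := sip_props Hs; split => //.
- exact: D_geo He Hd.
- move=> i j Hi Hj Hij; apply/eqP => Heq; move/negP: Hij; apply; apply/eqP.
  exact: geo_inj He Hd i j Hi Hj Heq.
- move=> i j Hi Hj Hij; apply/negP => /(Hind i j Hi Hj) H; by rewrite H eqxx in Hij.
Qed.

Lemma sipA_facts k x y z : sipA e k x y z -> exists f : nat -> T,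
  [/\ [/\ f 0 = x, f k.+1 = y & f k.+2 = z],
      (forall i j, i <= j <= k.+2 -> D (f i) (f j) (j - i)),
      (forall i j, i <= k.+2 -> j <= k.+2 -> i != j -> f i != f j) &
      (forall i j, i <= k.+2 -> j <= k.+2 -> j != i.+1 -> ~~ e (f i) (f j))].
Proof.
case/existsP=> w Hs; have [H0 H1 H2 H3] := sip_facts Hs.
have Hsz : size (tval w ++ [:: y; z]) = k.+2 by rewrite size_cat size_tuple addn2.
rewrite Hsz in H1 H2 H3.
exists (fun i => nth x (x :: (tval w ++ [:: y; z])) i); split => //=; split => //=.
- by rewrite nth_cat size_tuple ltnn subnn.
- by rewrite nth_cat size_tuple ltnNge leqnSn /= subSnn.
Qed.

Lemma sipB_facts k x y z : sipB e k x y z -> exists f : nat -> T,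
  [/\ [/\ f 0 = x, f 1 = y & f k.+2 = z],
      (forall i j, i <= j <= k.+2 -> D (f i) (f j) (j - i)),
      (forall i j, i <= k.+2 -> j <= k.+2 -> i != j -> f i != f j) &
      (forall i j, i <= k.+2 -> j <= k.+2 -> j != i.+1 -> ~~ e (f i) (f j))].
Proof.
case/existsP=> w Hs; have [H0 H1 H2 H3] := sip_facts Hs.
have Hsz : size (y :: tval w ++ [:: z]) = k.+2 by rewrite /= size_cat size_tuple addn1.
rewrite Hsz in H1 H2 H3.
exists (fun i => nth x (x :: y :: (tval w ++ [:: z])) i); split => //=; split => //=.
by rewrite nth_cat size_tuple ltnn subnn.
Qed.

Lemma sipA_build m k v y z : irreflexive e -> mfree e m -> k.+2 < m ->
  D v y k.+1 -> D v z k.+2 -> e y z -> sipA e k v y z.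
Proof.
move=> Hirr Hm km [[f [f0 fk Hf]] _] Hz Hyz.
pose g := fun i => if i <= k.+1 then f i else z.
have Hg : forall i, i < k.+2 -> e (g i) (g i.+1).
  move=> i Hi; rewrite /g; case: (ltngtP i k.+1) => H.
  - exact: Hf.
  - lia.
  - subst i; by rewrite fk.
have g0 : g 0 = v by rewrite /g leq0n.
have gk : g k.+2 = z by rewrite /g ltnn.
have := sip_of Hirr Hm km Hg. rewrite g0 gk => /(_ Hz).
rewrite mkseq2 => Hs.
apply/existsP; exists (@Tuple k T (mkseq (fun t => g t.+1) k) (introT eqP (size_mkseq _ _))).
move: Hs; rewrite /= /g leqnn ltnn fk //.
Qed.

Lemma sipB_build m k x y v : irreflexive e -> mfree e m -> k.+2 < m ->
  D y v k.+1 -> D x v k.+2 -> e x y -> sipB e k x y v.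
Proof.
move=> Hirr Hm km [[f [f0 fk Hf]] _] Hx Hxy.
pose g := fun i => if i is i'.+1 then f i' else x.
have Hg : forall i, i < k.+2 -> e (g i) (g i.+1).
  by case=> [|i] Hi /=; [rewrite f0 | apply: Hf].
have Hx' : D (g 0) (g k.+2) k.+2 by rewrite /= fk.
have Hs : sipath e (g 0) (mkseq (fun t => g t.+1) k.+2) by exact: (sip_of Hirr Hm km Hg Hx').
change (is_true (sipath e x (mkseq f k.+2))) in Hs.
have Hs' : sipath e x (f 0 :: mkseq (fun t => f t.+1) k ++ [:: f k.+1]).
  by rewrite -cat_cons -mkseq_front cats1 -mkseqS.
rewrite f0 fk in Hs'.
apply/existsP; exists (@Tuple k T (mkseq (fun t => f t.+1) k) (introT eqP (size_mkseq _ _))).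
exact: Hs'.
Qed.

Lemma useD (f : nat -> T) n (HD : forall i j, i <= j <= n -> D (f i) (f j) (j - i))
  i j d : i <= j -> j <= n -> j - i = d -> D (f i) (f j) d.
Proof. move=> ij jn <-; apply: HD; by rewrite ij jn. Qed.

Lemma useE (f : nat -> T) n (HD : forall i j, i <= j <= n -> D (f i) (f j) (j - i))
  i : i < n -> e (f i) (f i.+1).
Proof. move=> Hi; have [Hw _] := useD HD (i:=i) (j:=i.+1) (d:=1) (leqnSn _) Hi (subSnn _). exact: W1. Qed.

Lemma card_map (A B : finType) (X : {set A}) (Y : {set B}) (f : A -> B) :
  {in X &, injective f} -> (forall x, x \in X -> f x \in Y) -> #|X| <= #|Y|.
Proof.
move=> Hi Hm; rewrite -(card_in_imset Hi); apply: subset_leq_card.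
by apply/subsetP => y /imsetP [x Hx ->]; exact: Hm.
Qed.
End S.

Theorem lemma2p3 (T : finType) (e : rel T) (m : nat) :
  irreflexive e -> 4 <= m -> mfree e m ->
  forall (v : T) (k : nat), 1 <= k -> k <= m - 3 ->
  #|Pk e k v| = #|Eset e (Nout e v k.+1) (Nout e v k.+2)| /\
      #|Qk e k v| <= #|Ebar e (Nin e v k.+1) (Nout e v 1)| /\
      #|Rk e k v| <= #|Ebar e (Nin e v 1) (Nin e v k.+2)| /\
      #|Pk' e k v| <= #|Ebar e (Nout e v 1) (Nout e v k.+2)| /\
      #|Qk' e k v| <= #|Ebar e (Nout e v k.+1) (Nin e v 1)| /\
      #|Rk' e k v| = #|Eset e (Nin e v k.+2) (Nin e v k.+1)|.
Proof.
move=> Hirr m4 Hm v k k1 km.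
have km' : k.+2 < m by lia.
split; [|split; [|split; [|split; [|split]]]].
- apply/eqP; rewrite eqn_leq; apply/andP; split.
  + apply: (card_map (f := fun t : T * T * T => (t.1.2, t.2))).
      move=> [[x1 y1] z1] [[x2 y2] z2]; rewrite !inE /=.
      by move=> /andP[_ /eqP->] /andP[_ /eqP->] [-> ->].
    move=> [[x y] z]; rewrite !inE /=.
    case/andP=> /sipA_facts [f [[<- <- <-] HD Hne Hne']] /eqP Hx; rewrite -Hx.
    apply/and3P; split; [apply/D_iff | apply/D_iff | by apply: (useE HD (i:=k.+1)); lia].
    * by apply: (useD HD (i:=0) (j:=k.+1)); lia.
    * by apply: (useD HD (i:=0) (j:=k.+2)); lia.
  + apply: (@card_map _ _ _ _ (fun t : T * T => (v, t.1, t.2))).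
      by move=> [x1 y1] [x2 y2] _ _ [-> ->].
    move=> [y z]; rewrite !inE /= => /and3P[/D_iff Hy /D_iff Hz Hyz].
    by rewrite eqxx andbT; apply: (sipA_build Hirr Hm km' Hy Hz Hyz).
- apply: (card_map (f := fun t : T * T * T => (t.1.1, t.2))).
    move=> [[x1 y1] z1] [[x2 y2] z2]; rewrite !inE /=.
    by move=> /andP[_ /eqP->] /andP[_ /eqP->] [-> ->].
  move=> [[x y] z]; rewrite !inE /=.
  case/andP=> /sipA_facts [f [[<- <- <-] HD Hne Hne']] /eqP Hx; rewrite -Hx.
  apply/and5P; split; [apply/D_iff | apply/D_iff | apply: Hne | apply: Hne' | apply: Hne'] => //.
  * by apply: (useD HD (i:=0) (j:=k.+1)); lia.
  * by apply: (useD HD (i:=k.+1) (j:=k.+2)); lia.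
- apply: (card_map (f := fun t : T * T * T => (t.1.2, t.1.1))).
    move=> [[x1 y1] z1] [[x2 y2] z2]; rewrite !inE /=.
    by move=> /andP[_ /eqP->] /andP[_ /eqP->] [-> ->].
  move=> [[x y] z]; rewrite !inE /=.
  case/andP=> /sipA_facts [f [[<- <- <-] HD Hne Hne']] /eqP Hx; rewrite -Hx.
  apply/and5P; split; [apply/D_iff | apply/D_iff | apply: Hne | apply: Hne' | apply: Hne'] => //.
  * by apply: (useD HD (i:=k.+1) (j:=k.+2)); lia.
  * by apply: (useD HD (i:=0) (j:=k.+2)); lia.
  * lia.
- apply: (card_map (f := fun t : T * T * T => (t.1.2, t.2))).
    move=> [[x1 y1] z1] [[x2 y2] z2]; rewrite !inE /=.
    by move=> /andP[_ /eqP->] /andP[_ /eqP->] [-> ->].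
  move=> [[x y] z]; rewrite !inE /=.
  case/andP=> /sipB_facts [f [[<- <- <-] HD Hne Hne']] /eqP Hx; rewrite -Hx.
  apply/and5P; split; [apply/D_iff | apply/D_iff | apply: Hne | apply: Hne' | apply: Hne'] => //.
  * by apply: (useD HD (i:=0) (j:=1)); lia.
  * by apply: (useD HD (i:=0) (j:=k.+2)); lia.
  * lia.
  + apply: (card_map (f := fun t : T * T * T => (t.2, t.1.1))).
      move=> [[x1 y1] z1] [[x2 y2] z2]; rewrite !inE /=.
      by move=> /andP[_ /eqP->] /andP[_ /eqP->] [-> ->].
    move=> [[x y] z]; rewrite !inE /=.
    case/andP=> /sipB_facts [f [[<- <- <-] HD Hne Hne']] /eqP Hx; rewrite -Hx.
    apply/and5P; split; [apply/D_iff | apply/D_iff | apply: Hne | apply: Hne' | apply: Hne'] => //.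
    * by apply: (useD HD (i:=1) (j:=k.+2)); lia.
    * by apply: (useD HD (i:=0) (j:=1)); lia.
  - apply/eqP; rewrite eqn_leq; apply/andP; split.
    * apply: (card_map (f := fun t : T * T * T => (t.1.1, t.1.2))).
        move=> [[x1 y1] z1] [[x2 y2] z2]; rewrite !inE /=.
        by move=> /andP[_ /eqP->] /andP[_ /eqP->] [-> ->].
      move=> [[x y] z]; rewrite !inE /=.
      case/andP=> /sipB_facts [f [[<- <- <-] HD Hne Hne']] /eqP Hx; rewrite -Hx.
      apply/and3P; split; [apply/D_iff | apply/D_iff | by apply: (useE HD (i:=0)); lia].
      -- by apply: (useD HD (i:=0) (j:=k.+2)); lia.
      -- by apply: (useD HD (i:=1) (j:=k.+2)); lia.
    * apply: (@card_map _ _ _ _ (fun t : T * T => (t.1, t.2, v))).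
        by move=> [x1 y1] [x2 y2] _ _ [-> ->].
      move=> [x y]; rewrite !inE /= => /and3P[/D_iff Hx /D_iff Hy Hxy].
      by rewrite eqxx andbT; apply: (sipB_build Hirr Hm km' Hy Hx Hxy).
Qed.
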